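(* Let $R_4=\{a_1,a_2,b_1,b_2\}$ be the topological quandle with operations $a_i\triangleright a_j=a_i$, $b_i\triangleright b_j=b_i$, $a_i\triangleright b_j=a_{i+1}$, $b_i\triangleright a_j=b_{i+1}$, where subscripts are taken mod 2 so that $2+1$ means $1$. (This is the dihedral quandle of four elements.) Give $R_4$ the topology $\{\emptyset,\{a_1,a_2\},\{b_1,b_2\},R_4\}$. Then the first cohomology group $\bar{H}^{1}_{Q}(R_{4})=\mathbb{Z}^{4}$.
   Context: Setting: For a topological quandle $X$, $C_n(X)$ is the free abelian group generated by the singular $n$-simplices $\sigma:\Delta^n\to X$. We write $\sigma_{[x_1,\dots,x_{n+1}]}$ for a simplex whose $i$-th vertex maps to $x_i$. The boundary map is $\partial_n(\sigma_{[x_1,\dots,x_{n+1}]})=\sum_{i=2}^{n+1}(-1)^i(\sigma_{[x_1,\dots,\hat{x_i},\dots,x_{n+1}]}-\sigma_{[x_1\triangleright x_i,\dots,x_{i-1}\triangleright x_i,\hat{x_i},\dots,x_{n+1}]})$. $\bar{C}^R_n(X)$ is the quotient of $C_n(X)$ that identifies two $n$-simplices whenever they have the same vertices. $\bar{C}^D_n(X)$ is the subcomplex generated by the simplices $\sigma_{[x_1,\dots,x_{n+1}]}$ with $x_i=x_{i+1}$ for some $i$, for $n\ge1$; it is $0$ for $n=0$. Then $\bar{C}^Q_n(X)=\bar{C}^R_n(X)/\bar{C}^D_n(X)$. The group $\bar{H}^n_Q(X)$ is the $n$-th cohomology of $\mathrm{Hom}(\bar{C}^Q_*(X),\mathbb{Z})$.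 *)

(* Defs.v *)
From HB Require Import structures.
From mathcomp Require Import all_boot all_order all_algebra.
From mathcomp Require Import all_classical all_reals all_analysis.
From mathcomp Require Import Rstruct Rstruct_topology.
From Stdlib Require Import Rdefinitions.

Set Implicit Arguments.
Unset Strict Implicit.
Unset Printing Implicit Defensive.
Import Order.TTheory GRing.Theory Num.Theory.
Local Open Scope classical_set_scope.
Local Open Scope ring_scope.

Definition std_simplex (n : nat) : set 'rV[R]_n.+1 :=
  [set v | (forall i, 0 <= v ord0 i) /\ \sum_(i < n.+1) v ord0 i = 1].

Definition simplex_vertex (n : nat) (i : 'I_n.+1) : 'rV[R]_n.+1 :=
  delta_mx ord0 i.

Section QuandleComplex.
Variables (X : topologicalType) (qop : X -> X -> X).

(* A tuple (x_1,...,x_{n+1}) is the vertex tuple of some singular n-simplex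
   sigma : Delta^n -> X. The generators of \bar C^R_n(X) are exactly these
   tuples. *)
Definition realizable (n : nat) (x : 'I_n.+1 -> X) : Prop :=
  exists sigma : 'rV[R]_n.+1 -> X,
    {within @std_simplex n, continuous sigma} /\
    forall i, sigma (simplex_vertex i) = x i.

(* x_i = x_{i+1} for some i (generators of \bar C^D_n; none for n = 0). *)
Definition degenerate (n : nat) (x : 'I_n.+1 -> X) : Prop :=
  exists i j : 'I_n.+1, val j = (val i).+1 /\ x i = x j.

(* Basis elements of the free abelian group \bar C^Q_n(X). *)
Definition qgen (n : nat) (x : 'I_n.+1 -> X) : Prop :=
  realizable x /\ ~ degenerate x.

(* An n-cochain, i.e. an element of Hom(\bar C^Q_n(X), Z), given by its
   values on all (n+1)-tuples, required to vanish off the basis. *)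
Definition qcochain (n : nat) (f : ('I_n.+1 -> X) -> int) : Prop :=
  forall x, ~ qgen x -> f x = 0.

(* The faces occurring in the boundary formula (0-based index j = i - 1). *)
Definition face (m : nat) (x : 'I_m.+2 -> X) (j : 'I_m.+2) : 'I_m.+1 -> X :=
  fun k => x (lift j k).
Definition qface (m : nat) (x : 'I_m.+2 -> X) (j : 'I_m.+2) : 'I_m.+1 -> X :=
  fun k => if ltn (val (lift j k)) (val j) then qop (x (lift j k)) (x j)
           else x (lift j k).

(* delta^m f = f o partial_{m+1}, evaluated at an (m+2)-tuple x:
   sum_{i=2}^{m+2} (-1)^i (f(d_i x) - f(d'_i x)). *)
Definition qcoboundary (m : nat) (f : ('I_m.+1 -> X) -> int)
    : ('I_m.+2 -> X) -> int :=
  fun x => \sum_(j < m.+2 | ltn 0 (val j))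
             (-1) ^+ (val j).+1 * (f (face x j) - f (qface x j)).

Definition qcocycle (m : nat) (f : ('I_m.+2 -> X) -> int) : Prop :=
  qcochain f /\ forall x : 'I_m.+3 -> X, qgen x -> qcoboundary f x = 0.

Definition qcobound (m : nat) (f : ('I_m.+2 -> X) -> int) : Prop :=
  qcochain f /\
  exists g : ('I_m.+1 -> X) -> int,
    qcochain g /\ forall x : 'I_m.+2 -> X, qgen x -> f x = qcoboundary g x.

(* \bar H^{m+1}_Q(X) = Z^{m+1} / B^{m+1} is isomorphic to Z^k:
   there is an additive surjection Z^{m+1} -> Z^k with kernel B^{m+1}. *)
Definition qcohomology_iso_Zk (m k : nat) : Prop :=
  exists phi : (('I_m.+2 -> X) -> int) -> 'rV[int]_k,
    [/\ (forall f g, qcocycle f -> qcocycle g ->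
           phi (fun x => f x + g x) = phi f + phi g),
        (forall v, exists f, qcocycle f /\ phi f = v) &
        (forall f, qcocycle f -> (phi f = 0 <-> qcobound f))].

End QuandleComplex.

Inductive R4 := a1 | a2 | b1 | b2.

Definition R4_code (x : R4) : 'I_4 :=
  match x with a1 => inord 0 | a2 => inord 1 | b1 => inord 2 | b2 => inord 3 end.
Definition R4_decode (i : 'I_4) : R4 :=
  match val i with 0 => a1 | 1 => a2 | 2 => b1 | _ => b2 end.
Lemma R4_codeK : cancel R4_code R4_decode.
Proof. by case; rewrite /R4_decode /= inordK. Qed.

HB.instance Definition _ := Equality.copy R4 (can_type R4_codeK).
HB.instance Definition _ := Choice.copy R4 (can_type R4_codeK).

(* letter: true for a_i, false for b_i; next: index i |-> i+1 mod 2 *)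
Definition R4_isa (x : R4) : bool :=
  match x with a1 | a2 => true | _ => false end.
Definition R4_next (x : R4) : R4 :=
  match x with a1 => a2 | a2 => a1 | b1 => b2 | b2 => b1 end.

(* a_i |> a_j = a_i, b_i |> b_j = b_i, a_i |> b_j = a_{i+1}, b_i |> a_j = b_{i+1} *)
Definition R4op (x y : R4) : R4 :=
  if R4_isa x == R4_isa y then x else R4_next x.

(* Topology generated by the subbase {{a1,a2},{b1,b2}}, i.e. the topology
   {emptyset, {a1,a2}, {b1,b2}, R4}. *)
Definition R4_subbase (s : bool) : set R4 :=
  if s then [set x | x = a1 \/ x = a2] else [set x | x = b1 \/ x = b2].

HB.instance Definition _ :=
  isSubBaseTopological.Build R4 (@setT bool) R4_subbase.

(* Main.v *)
Require Import Defs.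
From mathcomp Require Import all_boot all_order all_algebra.
From mathcomp Require Import all_classical all_reals all_analysis.
From mathcomp Require Import finmap Rstruct Rstruct_topology lra.
From Stdlib Require Import Rdefinitions.
Import Order.TTheory GRing.Theory Num.Theory.
Local Open Scope classical_set_scope.
Local Open Scope ring_scope.

Lemma open_blk (b : bool) : open [set x : R4 | R4_isa x = b].
rewrite /open /=.
exists [set [set x : R4 | R4_isa x = b]].
  move=> _ ->; exists [fset b]%fset; first by move=> i _; exact: in_setT.
  apply/seteqP; split => x /=.
    move=> /(_ b); rewrite /= inE eqxx => /(_ isT).
    by case: b; case: x; rewrite /R4_subbase /=; intuition congruence.
  move=> hx i; rewrite /= inE => /eqP ->.
  by move: hx; case: b; case: x; rewrite /R4_subbase /=; intuition congruence.
apply/seteqP; split; first by move=> x [_ -> ].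
by move=> x hx; exists [set x : R4 | R4_isa x = b].
Qed.

Lemma closed_blk (b : bool) : closed [set x : R4 | R4_isa x = b].
Proof.
have -> : [set x : R4 | R4_isa x = b] = ~` [set x : R4 | R4_isa x = ~~ b].
  by apply/seteqP; split => x /=; case: b; case: x.
exact/open_closedC/open_blk.
Qed.

Definition segp n (i : 'I_n.+1) (t : R) : 'rV[R]_n.+1 :=
  simplex_vertex ord0 + t *: (simplex_vertex i - simplex_vertex ord0).

Lemma segp_cont n i : continuous (@segp n i).
Proof.
move=> t; rewrite /segp.
have -> : (fun s : R => simplex_vertex ord0 + s *: (simplex_vertex i - simplex_vertex ord0)) = (fun=> simplex_vertex ord0) + (fun s : R => s *: (simplex_vertex i - simplex_vertex ord0)) by [].
apply: continuousD.
  exact: cst_continuous.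
by apply: continuousZr_tmp.
Qed.

Lemma sum_delta m (j : 'I_m) : \sum_(k < m) ((k == j)%:R : R) = 1.
Proof. by rewrite (bigD1 j) //= eqxx big1 ?addr0 // => k /negbTE ->. Qed.

Lemma segp_simplex n i t : 0 <= t <= 1 -> @std_simplex n (@segp n i t).
Proof.
move=> /andP[t0 t1]; split.
  move=> k; rewrite /segp /simplex_vertex !mxE /=.
  by case: (k == ord0); case: (k == i) => /=; lra.
rewrite /segp; under eq_bigr => k _ do rewrite !mxE /=.
rewrite big_split /= -mulr_sumr sumrB !sum_delta; lra.
Qed.

Lemma segp0 n i : @segp n i 0 = simplex_vertex ord0.
Proof. by rewrite /segp scale0r addr0. Qed.
Lemma segp1 n i : @segp n i 1 = simplex_vertex i.
Proof. by rewrite /segp scale1r addrC subrK. Qed.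

Lemma realizable_blk n (x : 'I_n.+1 -> R4) : realizable x ->
  forall i, R4_isa (x i) = R4_isa (x ord0).
Proof.
move=> [sigma [cs hv]] i.
set S := @segp n i @` `[0, 1].
have SS : S `<=` @std_simplex n.
  by move=> _ [t /= /andP[? ?] <-]; apply: segp_simplex; apply/andP.
have cS : connected S.
  apply: connected_continuous_connected.
    by apply/connected_intervalP; apply: interval_is_interval.
  by apply: continuous_subspaceT => t; apply: segp_cont.
have cI : connected (sigma @` S).
  apply: connected_continuous_connected => //.
  exact: continuous_subspaceW SS cs.
set b := R4_isa (x ord0).
have S0 : S (simplex_vertex ord0).
  by exists 0; [rewrite /= in_itv /= lexx ler01 | rewrite segp0].
have S1 : S (simplex_vertex i).
  by exists 1; [rewrite /= in_itv /= lexx ler01 | rewrite segp1].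
have E : sigma @` S `&` [set z | R4_isa z = b] = sigma @` S.
  apply: cI.
- by exists (x ord0); split => //; exists (simplex_vertex ord0) => //.
- by exists [set z | R4_isa z = b]; [exact: open_blk|].
- by exists [set z | R4_isa z = b]; [exact: closed_blk|].
have : (sigma @` S) (x i) by exists (simplex_vertex i).
by rewrite -E => -[].
Qed.

Lemma open_next (A : set R4) : open A -> forall y, A y -> A (R4_next y).
Proof.
move=> oA y Ay.
rewrite /open /= in oA.
case: oA => D' sD' AE.
move: Ay; rewrite -AE => -[i Di Fy]; exists i => //.
have [F _ Fe] := sD' _ Di; rewrite -Fe in Fy *.
move=> j jF; move: (Fy j jF); clear Fy jF. by case: j; case: y => /=; rewrite /R4_subbase /=; intuition congruence.
Qed.

Lemma nbhs_blk (y : R4) (N : set R4) : nbhs y N -> forall z, R4_isa z = R4_isa y -> N z.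
Proof.
rewrite nbhsE => -[B [oB By] BN] z hz; apply: BN.
have hn := @open_next _ oB _ By.
by move: hz By hn; case: z; case: y.
Qed.

Definition tup2 (u v : R4) : 'I_2 -> R4 := fun i => if val i == 0%N then u else v.

Lemma realizable_tup2 (u v : R4) : R4_isa u = R4_isa v -> @realizable R4 1 (tup2 u v).
Proof.
move=> huv.
exists (fun w : 'rV[R]_2 => if w ord0 ord0 == 1 then u else v); split.
  apply: continuous_subspaceT => w N hN.
  have : nbhs w setT by apply: filterT.
  apply: filterS => z _ /=.
  have H := @nbhs_blk _ _ hN. apply: H. by do 2 case: ifP => _.
move=> i; rewrite /simplex_vertex mxE /tup2.
case: i => -[|[|//]] /= _; first by rewrite eqxx.
by rewrite eq_sym oner_eq0.
Qed.

Definition gen (k : 'I_4) : 'I_2 -> R4 :=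
  tup2 (R4_decode k) (R4_next (R4_decode k)).
Definition code (x : 'I_2 -> R4) : 'I_4 := R4_code (x ord0).

Lemma R4_decodeK : cancel R4_decode R4_code.
Proof.
move=> k; apply/val_inj; rewrite /R4_decode.
by case: k => -[|[|[|[|//]]]] /= ?; rewrite inordK.
Qed.

Lemma tup2_nondeg (u v : R4) : u <> v -> ~ @degenerate R4 1 (tup2 u v).
Proof.
move=> uv [i [j [hij e]]]; apply: uv; move: e; rewrite /tup2.
by case: i hij => -[|[|//]] /= ?; case: j => -[|[|//]] /=.
Qed.

Lemma qgen_gen k : @qgen R4 1 (gen k).
Proof.
split; first by apply: realizable_tup2; case: (R4_decode k).
by apply: tup2_nondeg; case: (R4_decode k).
Qed.

Lemma qgen2 (x : 'I_2 -> R4) : @qgen R4 1 x -> x = gen (code x).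
Proof.
move=> [rx nd].
have hb := @realizable_blk _ _ rx ord_max.
have ne : x ord0 <> x ord_max.
  by move=> e; apply: nd; exists ord0, ord_max.
have ex : x = tup2 (x ord0) (x ord_max).
  apply: funext => i; rewrite /tup2.
  by case: i => -[|[|//]] /= ?; congr x; apply: val_inj.
rewrite /gen /code R4_codeK {1}ex; congr tup2.
by move: hb ne; case: (x ord0); case: (x ord_max).
Qed.

Lemma qface_face m (x : 'I_m.+2 -> R4) :
  (forall i, R4_isa (x i) = R4_isa (x ord0)) ->
  forall j, qface R4op x j = face x j.
Proof.
move=> H j; apply: funext => k; rewrite /qface /face.
by case: ifP => // _; rewrite /R4op H (H j) eqxx.
Qed.

Lemma cob_zero m (g : ('I_m.+1 -> R4) -> int) (x : 'I_m.+2 -> R4) :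
  realizable x -> qcoboundary R4op g x = 0.
Proof.
move=> rx; rewrite /qcoboundary big1 // => j _.
by rewrite qface_face ?subrr ?mulr0 //; apply: realizable_blk.
Qed.

Theorem mainTheorem17 : @qcohomology_iso_Zk R4 R4op 0 4.
Proof.
exists (fun f => \row_(k < 4) f (gen k)); split.
- by move=> f g _ _; apply/rowP => k; rewrite !mxE.
- move=> v.
  exists (fun x => if pselect (@qgen R4 1 x) then v ord0 (code x) else 0).
  split.
    split; first by move=> x nq; case: pselect.
    by move=> x [rx _]; apply: cob_zero.
  apply/rowP => k; rewrite mxE.
  destruct pselect as [q|nq]; last by exfalso; apply: nq; apply: qgen_gen.
  by rewrite /code /gen /tup2 /= R4_decodeK.
- move=> f [cf cc]; split.
    move=> H; split => //.
    exists (fun _ => 0); split; first by [].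
    move=> x qx; rewrite (@cob_zero 0 _ x qx.1).
    rewrite (@qgen2 x qx).
    by have := congr1 (fun M : 'M[int]_(1,4) => M ord0 (code x)) H; rewrite !mxE.
  move=> [_ [g [_ hg]]]; apply/rowP => k; rewrite !mxE hg ?cob_zero //.
    exact: (qgen_gen k).1.
  exact: qgen_gen.
Qed.
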